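(* Let $R$ be an Armendariz ring. Then the polynomial ring $R[x]$ is a generalized right quasi-Baer ring if and only if $R$ is a generalized right quasi-Baer ring.
   Context: All rings are associative with identity. For a nonempty subset $X$ of a ring $R$, $r_R(X)=\{a\in R : xa=0 \text{ for all } x\in X\}$, and for a positive integer $n$, $X^n$ denotes the set of all products $a_1\cdots a_n$ with $a_i\in X$. A ring $R$ is generalized right quasi-Baer if for every right ideal $I$ of $R$ there exist a positive integer $n$ (depending on $I$) and an idempotent $e\in R$ with $r_R(I^n)=eR$. A ring $R$ is Armendariz if whenever polynomials $f(x)=\sum_{i=0}^m a_ix^i$ and $g(x)=\sum_{j=0}^n b_jx^j$ in $R[x]$ satisfy $f(x)g(x)=0$, then $a_ib_j=0$ for all $i,j$. *)

(* Defs.v *)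
From HB Require Import structures.
From mathcomp Require Import all_boot all_algebra.
Set Implicit Arguments. Unset Strict Implicit. Unset Printing Implicit Defensive.
Import GRing.Theory.
Local Open Scope ring_scope.

(* Subsets of a (possibly infinite) ring are predicates R -> Prop. *)

Definition right_ideal (R : nzRingType) (I : R -> Prop) : Prop :=
  [/\ I 0,
      (forall a b, I a -> I b -> I (a - b)) &
      (forall a r, I a -> I (a * r))].

Definition r_ann (R : nzRingType) (X : R -> Prop) : R -> Prop :=
  fun a => forall x, X x -> x * a = 0.

Definition set_pow (R : nzRingType) (X : R -> Prop) (n : nat) : R -> Prop :=
  fun y => exists s : seq R,
    [/\ size s = n, (forall a, a \in s -> X a) & y = \prod_(a <- s) a].

Definition principal_right (R : nzRingType) (e : R) : R -> Prop :=
  fun a => exists r, a = e * r.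

Definition gen_right_quasi_Baer (R : nzRingType) : Prop :=
  forall I : R -> Prop, right_ideal I ->
    exists n : nat, exists e : R,
      (0 < n)%N /\ e * e = e /\
      (forall a, r_ann (set_pow I n) a <-> principal_right e a).

Definition armendariz (R : nzRingType) : Prop :=
  forall f g : {poly R}, f * g = 0 -> forall i j : nat, f`_i * g`_j = 0.

(* Main.v *)
Require Import Defs.
From HB Require Import structures.
From mathcomp Require Import all_boot all_algebra.
Set Implicit Arguments. Unset Strict Implicit. Unset Printing Implicit Defensive.
Import GRing.Theory.
Local Open Scope ring_scope.

Lemma coef_prod_ann (R : nzRingType) (P : R -> Prop) (gs : seq {poly R}) :
  (forall g, g \in gs -> forall i, P g`_i) ->
  forall t u : R,
  (forall s : seq R, size s = size gs -> (forall a, a \in s -> P a) ->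
     t * (\prod_(a <- s) a) * u = 0) ->
  forall m, t * (\prod_(g <- gs) g)`_m * u = 0.
Proof.
elim: gs => [|g gs IH] Hg t u Hs m.
  rewrite big_nil coef1; case: (m == 0%N).
    by have := Hs [::] erefl (fun a (h : a \in [::]) => False_ind _ (notF h));
       rewrite big_nil.
  by rewrite mulr0 mul0r.
rewrite big_cons coefM mulr_sumr mulr_suml big1 // => i _.
rewrite mulrA; apply: IH.
  by move=> h hin; apply: Hg; rewrite in_cons hin orbT.
move=> s hs hP.
have -> : t * g`_i * \prod_(a <- s) a = t * \prod_(a <- g`_i :: s) a by rewrite big_cons mulrA.
apply: Hs; first by rewrite /= hs.
move=> a; rewrite in_cons => /orP [/eqP -> | ]; last exact: hP.
by apply: Hg; rewrite in_cons eqxx.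
Qed.

Lemma arm_ann (R : nzRingType) (J : {poly R} -> Prop) :
  armendariz R ->
  forall (s : seq R) (c h : {poly R}),
  (forall a, a \in s -> exists g i, J g /\ g`_i = a) ->
  (forall gs : seq {poly R}, size gs = size s -> (forall g, g \in gs -> J g) ->
     c * (\prod_(g <- gs) g) * h = 0) ->
  forall k j, c`_k * (\prod_(a <- s) a) * h`_j = 0.
Proof.
move=> HA; elim=> [|a s IH] c h HI Hg k j.
  have := Hg [::] erefl (fun a (hh : a \in [::]) => False_ind _ (notF hh)).
  rewrite !big_nil !mulr1 => H; exact: HA H k j.
have [g [i [Jg gia]]] : exists g i, J g /\ g`_i = a.
  by apply: HI; rewrite in_cons eqxx.
have IH' := IH ((c`_k)%:P * g) h.
have := IH' _ _ i j.
rewrite coefCM gia big_cons !mulrA; apply.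
  by move=> b hb; apply: HI; rewrite in_cons hb orbT.
move=> gs hs hJ.
have H0 := Hg (g :: gs); rewrite /= hs big_cons in H0.
have H1 : c * (g * \prod_(g0 <- gs) g0 * h) = 0.
  rewrite mulrA; apply: H0 => // x; rewrite in_cons => /orP [/eqP -> //|]; exact: hJ.
have H2 : (c`_k)%:P * (g * \prod_(g0 <- gs) g0 * h) = 0.
  by apply/polyP => m; rewrite coefCM coef0; exact: HA H1 k m.
by rewrite -!mulrA; rewrite -!mulrA in H2.
Qed.

Lemma polyC_prod (R : nzRingType) (s : seq R) :
  (\prod_(a <- s) a)%:P = \prod_(b <- map (@polyC R) s) b.
Proof.
elim: s => [|a s IH]; first by rewrite !big_nil.
by rewrite /= !big_cons polyCM IH.
Qed.

Theorem corollary3p11 (R : nzRingType) :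
  armendariz R -> (gen_right_quasi_Baer {poly R} <-> gen_right_quasi_Baer R).
Proof.
move=> HA; split.
- move=> HP I [I0 IB IM].
  have ID : forall a b, I a -> I b -> I (a + b).
    move=> a b Ia Ib; have := IB a (0 - b) Ia (IB _ _ I0 Ib).
    by rewrite sub0r opprK.
  pose Ix := fun g : {poly R} => forall i, I g`_i.
  have RIx : right_ideal Ix.
    split.
    + by move=> i; rewrite coef0.
    + by move=> a b Ha Hb i; rewrite coefB; apply: IB.
    + move=> a r Ha i; rewrite coefM; apply: (big_ind I) => //.
      by move=> j _; apply: IM.
  have [n [E [npos [EE HE]]]] := HP Ix RIx.
  exists n, E`_0; split => //; split.
    by rewrite -coef0M EE.
  move=> a; split.
  + move=> Ha.
    have Hx : r_ann (set_pow Ix n) a%:P.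
      move=> x [gs [sz allJ ->]].
      apply/polyP => m; rewrite coefMC coef0.
      have := @coef_prod_ann R I gs (fun g hg => allJ g hg) 1 a _ m.
      rewrite mul1r; apply.
      move=> s hs hI; rewrite mul1r; apply: Ha.
      by exists s; split => //; rewrite hs.
    have [q hq] := (HE a%:P).1 Hx.
    exists q`_0.
    by rewrite -coef0M -hq coefC eqxx.
  + move=> [r ->] x [s [sz allI ->]].
    rewrite mulrA.
    suff -> : \prod_(a0 <- s) a0 * E`_0 = 0 by rewrite mul0r.
    have HEE : r_ann (set_pow Ix n) E by apply/HE; exists 1; rewrite mulr1.
    have H : (\prod_(a <- s) a)%:P * E = 0.
      apply: HEE; exists (map (@polyC R) s); split.
      * by rewrite size_map.
      * move=> p /mapP [b hb ->] i; rewrite coefC.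
        by case: (i == 0)%N => //; apply: allI.
      * exact: polyC_prod.
    by have := congr1 (fun p : {poly R} => p`_0) H; rewrite coefCM coef0.
- move=> HR J [J0 JB JM].
  pose I := fun a : R => exists g i, J g /\ g`_i = a.
  have RI : right_ideal I.
    split.
    + by exists 0, 0%N; rewrite coef0.
    + move=> a b [g [i [Jg <-]]] [h [j [Jh <-]]].
      exists (g * 'X^j - h * 'X^i), (i + j)%N; split.
        by apply: JB; apply: JM.
      rewrite coefB !coefMXn ltnNge leq_addl ltnNge leq_addr /=.
      by rewrite addnK addKn.
    + move=> a r [g [i [Jg <-]]]; exists (g * r%:P), i; split.
        exact: JM.
      by rewrite coefMC.
  have [n [e [npos [ee He]]]] := HR I RI.
  exists n, e%:P; split => //; split; first by rewrite -polyCM ee.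
  move=> f; split.
  + move=> Hf; exists f.
    apply/polyP => k; rewrite coefCM.
    have Hk : r_ann (set_pow I n) f`_k.
      move=> x [s [sz allI ->]].
      have := @arm_ann R J HA s 1 f allI _ 0%N k.
      rewrite coef1 eqxx mul1r; apply.
      move=> gs hs hJ; rewrite mul1r; apply: Hf.
      by exists gs; split => //; rewrite hs.
    have [r ->] := (He _).1 Hk.
    by rewrite mulrA ee.
  + move=> [q ->] y [gs [sz allJ ->]].
    rewrite mulrA.
    suff -> : \prod_(g <- gs) g * e%:P = 0 by rewrite mul0r.
    apply/polyP => m; rewrite coefMC coef0.
    have Hee : r_ann (set_pow I n) e by apply/He; exists 1; rewrite mulr1.
    have := @coef_prod_ann R I gs _ 1 e _ m.
    rewrite mul1r; apply.
      by move=> g hg i; exists g, i; split => //; apply: allJ.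
    move=> s hs hI; rewrite mul1r; apply: Hee.
    by exists s; split => //; rewrite hs.
Qed.
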